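(* Let $F$ be a forest on $n\ge 2$ vertices and let $v\in V(F)$. Then $$\frac{\xi(F)}{\xi(F-v)}\le \begin{cases} 2^{\frac{n-3}{2}}+1 & \text{if } n \text{ is odd},\\ 2^{\frac{n-2}{2}}+1 & \text{if } n \text{ is even}.\end{cases}$$
   Context: For a graph $H$, $\xi(H)$ denotes the number of maximum independent sets of $H$ (independent sets of size equal to the independence number $\alpha(H)$); for the graph with no vertices, $\xi=1$. $F-v$ is the graph obtained from $F$ by deleting $v$ and its incident edges. *)

(* Defs.v *)
From mathcomp Require Import all_boot all_order all_algebra.
Set Implicit Arguments. Unset Strict Implicit. Unset Printing Implicit Defensive.

(* A finite simple graph is a symmetric irreflexive relation e on a finType T.
   A (sub)graph is given by a vertex set S : {set T}; the graph induced on S. *)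

Definition simple_graph (T : finType) (e : rel T) : Prop :=
  symmetric e /\ irreflexive e.

Definition acyclic (T : finType) (e : rel T) : Prop :=
  forall c : seq T, uniq c -> 2 < size c -> ~~ cycle e c.

Definition indep (T : finType) (e : rel T) (A : {set T}) : bool :=
  [forall x in A, forall y in A, ~~ e x y].

Definition alpha (T : finType) (e : rel T) (S : {set T}) : nat :=
  \max_(A : {set T} | (A \subset S) && indep e A) #|A|.

Definition xi (T : finType) (e : rel T) (S : {set T}) : nat :=
  #|[set A : {set T} | [&& A \subset S, indep e A & #|A| == alpha e S]]|.

(* Main.v *)
Require Import Defs.
From mathcomp Require Import all_boot all_order all_algebra.
From mathcomp Require Import zify.
Import GRing.Theory Num.Theory.
Set Implicit Arguments. Unset Strict Implicit. Unset Printing Implicit Defensive.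

Definition IS (T : finType) (e : rel T) (S : {set T}) (k : nat) :=
  [set A : {set T} | [&& A \subset S, indep e A & #|A| == k]].

Lemma indepP (T : finType) (e : rel T) (A : {set T}) :
  reflect (forall x y, x \in A -> y \in A -> ~~ e x y) (indep e A).
Proof.
apply: (iffP forallP) => [H x y xA yA | H x].
- by move: (H x); rewrite xA /= => /forallP /(_ y); rewrite yA.
- apply/implyP => xA; apply/forallP => y; apply/implyP => yA; exact: H.
Qed.

Lemma indepS (T : finType) (e : rel T) (A B : {set T}) :
  B \subset A -> indep e A -> indep e B.
Proof.
move=> /subsetP sBA /indepP H; apply/indepP => x y xB yB; apply: H; exact: sBA.
Qed.

Lemma indepU1 (T : finType) (e : rel T) v (B : {set T}) :
  symmetric e -> irreflexive e -> indep e B ->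
  (forall x, x \in B -> ~~ e v x) -> indep e (v |: B).
Proof.
move=> es ei /indepP H Hv; apply/indepP => x y; rewrite !in_setU1.
case/predU1P => [->|xB]; case/predU1P => [->|yB].
- by rewrite ei.
- exact: Hv.
- rewrite es; exact: Hv.
- exact: H.
Qed.

Lemma alpha_ge (T : finType) (e : rel T) (S A : {set T}) :
  A \subset S -> indep e A -> #|A| <= alpha e S.
Proof.
move=> sA iA; rewrite /alpha.
apply: (@leq_bigmax_cond _ (fun A : {set T} => (A \subset S) && indep e A) (fun A => #|A|)).
by rewrite sA.
Qed.

Lemma alpha_le (T : finType) (e : rel T) (S : {set T}) (k : nat) :
  (forall A : {set T}, A \subset S -> indep e A -> #|A| <= k) -> alpha e S <= k.
Proof. move=> H; rewrite /alpha; apply/bigmax_leqP => A /andP[]; exact: H. Qed.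

Lemma alpha_att (T : finType) (e : rel T) (S : {set T}) :
  exists A : {set T}, [/\ A \subset S, indep e A & #|A| = alpha e S].
Proof.
have P0 : (set0 \subset S) && indep e set0.
  by rewrite sub0set; apply/indepP => x y; rewrite in_set0.
rewrite /alpha (@bigmax_eq_arg _ set0 (fun A : {set T} => (A \subset S) && indep e A) (fun A => #|A|) P0).
case: arg_maxnP => // A /andP[sA iA] _. by exists A.
Qed.

Lemma IS_xi (T : finType) (e : rel T) (S : {set T}) (k : nat) :
  alpha e S <= k -> #|IS e S k| <= xi e S.
Proof.
rewrite leq_eqVlt => /orP[/eqP <- //| lt].
suff -> : IS e S k = set0 by rewrite cards0.
apply/setP => A; rewrite in_set0 inE; apply/negP => /and3P[sA iA /eqP cA].
by move: (alpha_ge sA iA); rewrite cA leqNgt lt.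
Qed.

Lemma inj_bound (T : finType) (Q R : {set {set T}}) u :
  (forall A, A \in Q -> u \in A) -> (forall A, A \in Q -> A :\ u \in R) ->
  #|Q| <= #|R|.
Proof.
move=> Hu HR.
rewrite -(@card_in_imset _ _ (fun A => A :\ u)).
  apply: subset_leq_card; apply/subsetP => B /imsetP[A AQ ->]; exact: HR.
move=> A B AQ BQ /= eqAB.
by rewrite -(setD1K (Hu _ AQ)) -(setD1K (Hu _ BQ)) eqAB.
Qed.

Lemma IS_D1 (T : finType) (e : rel T) (S S' A : {set T}) k u :
  A \in IS e S k -> u \in A -> A :\ u \subset S' -> A :\ u \in IS e S' k.-1.
Proof.
rewrite !inE => /and3P[_ iA /eqP cA] uA ->; rewrite (indepS (subD1set A u) iA) /=.
by rewrite -cA (cardsD1 u A) uA add1n.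
Qed.

Lemma noext (T : finType) (e : rel T) (S : {set T}) x y p :
  symmetric e -> irreflexive e -> acyclic e ->
  uniq [:: x, y & p] -> path e x (y :: p) ->
  (forall z, z \in S -> e x z -> z \in [:: x, y & p]) ->
  forall z, z \in S -> e x z -> z = y.
Proof.
move=> es ei ac hu hp H z zS exz.
have := H z zS exz; rewrite !inE => /or3P[/eqP zx | /eqP // | zp].
  by move: exz; rewrite zx ei.
exfalso. case/splitPr: zp hu hp => p1 p2 hu hp.
have : uniq ([:: x, y & rcons p1 z] ++ p2) by rewrite cat_cons cat_cons cat_rcons.
rewrite cat_uniq => /andP[hu1 _].
have hs : 2 < size [:: x, y & rcons p1 z] by rewrite /= size_rcons.
have hc : cycle e [:: x, y & rcons p1 z].
  change (path e x (rcons (y :: rcons p1 z) x)).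
  rewrite rcons_path; apply/andP; split.
    change (path e x (rcons (y :: p1) z)); rewrite rcons_path.
    move: hp; change (path e x ((y :: p1) ++ z :: p2) -> path e x (y :: p1) && e (last x (y :: p1)) z).
    by rewrite cat_path => /andP[-> /= /andP[-> _]].
  by rewrite /= last_rcons es.
by move: (ac _ hu1 hs); rewrite hc.
Qed.

Lemma leaf_aux (T : finType) (e : rel T) (S : {set T}) :
  symmetric e -> irreflexive e -> acyclic e -> forall k x y p,
  #|T| <= size p + k -> uniq [:: x, y & p] -> all (mem S) [:: x, y & p] ->
  path e x (y :: p) ->
  exists u w, [/\ u \in S, w \in S, e u w & forall z, z \in S -> e u z -> z = w].
Proof.
move=> es ei ac k; elim: k => [|k IH] x y p hk hu ha hp;
  case: (boolP [exists z in S, e x z && (z \notin [:: x, y & p])])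
    => [/exists_inP[z zS /andP[exz zn]] | hno].
- have hu' : uniq (z :: [:: x, y & p]) by rewrite /= zn.
  move/card_uniqP: hu' => /= hc.
  have := max_card (mem (z :: [:: x, y & p])). rewrite hc /=; move: hk; rewrite addn0 => hk hm; have := leq_trans hm hk; by move=> /ltn_geF; rewrite ltnW // ltnW.
- have Hn : forall z, z \in S -> e x z -> z \in [:: x, y & p].
    move=> z zS exz; apply/negPn/negP => zn; move/negP: hno; apply.
    by apply/exists_inP; exists z => //; rewrite exz.
  exists x, y; move: ha => /= /and3P[xS yS _]; split => //.
    by move: hp => /= /andP[].
  exact: noext Hn.
- apply: (IH z x (y :: p)) => //=.
  + by rewrite addSnnS.
  + by rewrite zn.
  + by rewrite zS.
  + by rewrite es exz.
- have Hn : forall z, z \in S -> e x z -> z \in [:: x, y & p].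
    move=> z zS exz; apply/negPn/negP => zn; move/negP: hno; apply.
    by apply/exists_inP; exists z => //; rewrite exz.
  exists x, y; move: ha => /= /and3P[xS yS _]; split => //.
    by move: hp => /= /andP[].
  exact: noext Hn.
Qed.

Lemma noedge (T : finType) (e : rel T) (S : {set T}) (k : nat) :
  ~~ [exists x in S, exists y in S, e x y] ->
  (forall A : {set T}, A \subset S -> indep e A -> #|A| <= k) -> #|IS e S k| <= 1.
Proof.
move=> hno hk.
have iS : indep e S.
  apply/indepP => x y xS yS; apply/negP => exy; move/negP: hno; apply.
  apply/exists_inP; exists x => //; apply/exists_inP; by exists y.
have cS := hk S (subxx S) iS.
apply: (@leq_trans #|[set S]|); last by rewrite cards1.
apply: subset_leq_card; apply/subsetP => A; rewrite !inE => /and3P[sA _ /eqP cA].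
by rewrite eqEcard sA /= cA.
Qed.

Lemma countB (T : finType) (e : rel T) :
  symmetric e -> irreflexive e -> acyclic e -> forall m (S : {set T}) k,
  #|S| <= m -> (forall A : {set T}, A \subset S -> indep e A -> #|A| <= k) ->
  #|IS e S k| <= 2 ^ (#|S| ./2).
Proof.
move=> es ei ac m; elim: m => [|m IH] S k hS hk;
  case: (boolP [exists x in S, exists y in S, e x y])
    => [/exists_inP[x xS /exists_inP[y yS exy]] | hno];
  try (apply: leq_trans (noedge hno hk) _; by rewrite expn_gt0).
  by move: hS; rewrite leqn0 => /eqP/cards0_eq S0; rewrite S0 in_set0 in xS.
have h1 : uniq [:: x; y] by rewrite /= inE andbT; apply: contraTneq exy => ->; rewrite ei.
have h2 : all (mem S) [:: x; y] by rewrite /= xS yS.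
have h3 : path e x [:: y] by rewrite /= exy.
have [u [w [uS wS euw Hu]]] :=
  @leaf_aux T e S es ei ac #|T| x y [::] (leqnn _) h1 h2 h3.
have uw : u != w by apply: contraTneq euw => ->; rewrite ei.
set S' := S :\ u :\ w.
have cS : #|S| = #|S'|.+2.
  rewrite (cardsD1 u S) uS (cardsD1 w (S :\ u)) in_setD1 eq_sym uw wS.
  by rewrite add1n add1n.
have hk' : forall B : {set T}, B \subset S' -> indep e B -> #|B| <= k.-1.
  move=> B sB iB.
  have uB : u \notin B.
    by apply/negP => /(subsetP sB); rewrite !in_setD1 eqxx andbF.
  have wB : w \notin B.
    by apply/negP => /(subsetP sB); rewrite !in_setD1 eqxx.
  have iB' : indep e (u |: B).
    apply: indepU1 => // z zB; apply/negP => euz.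
    have zS : z \in S by move/(subsetP sB): zB; rewrite !in_setD1 => /and3P[].
    by move: zB; rewrite (Hu z zS euz) (negbTE wB).
  have := hk (u |: B).
  have sB' : u |: B \subset S.
    apply/subsetP => z; rewrite in_setU1 => /predU1P[-> //|zB].
    by move/(subsetP sB): zB; rewrite !in_setD1 => /and3P[].
  move=> /(_ sB' iB'); rewrite cardsU1 uB add1n.
  by case: k {hk} => //.
have hS' : #|S'| <= m by move: hS; rewrite cS; lia.
have IH' := IH S' k.-1 hS' hk'.
rewrite -(cardsID [set A : {set T} | u \in A] (IS e S k)).
rewrite cS /= expnS mul2n -addnn; apply: leq_add; apply: leq_trans IH'.
- apply: (@inj_bound _ _ _ u) => A /setIP[hA uA']; have uA : u \in A by move: uA'; rewrite inE.
    done.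
  apply: (IS_D1 hA uA); apply/subsetP => z; rewrite !in_setD1 => /andP[zu zA].
  move: hA; rewrite inE => /and3P[sA /indepP iA _].
  rewrite zu (subsetP sA _ zA) !andbT; apply/eqP => zw.
  by move: (iA u z uA zA); rewrite zw euw.
- have wA : forall A : {set T}, A \in IS e S k :\: [set A : {set T} | u \in A] -> w \in A.
    move=> A; rewrite !inE => /andP[uA /and3P[sA iA /eqP cA]].
    apply/negPn/negP => wA.
    have iA' : indep e (u |: A).
      apply: indepU1 => // z zA; apply/negP => euz.
      have zw := Hu z (subsetP sA _ zA) euz; by rewrite zw (negbTE wA) in zA.
    have sA' : u |: A \subset S.
      by apply/subsetP => z; rewrite in_setU1 => /predU1P[-> //|zA]; apply: (subsetP sA).
    by move: (hk _ sA' iA'); rewrite cardsU1 uA cA add1n ltnn.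
  apply: (@inj_bound _ _ _ w) => // A hA.
  have := hA; rewrite inE => /andP[uA hA'].
  apply: (IS_D1 hA' (wA _ hA)).
  apply/subsetP => z; rewrite !in_setD1 => /andP[zw zA].
  move: hA'; rewrite inE => /and3P[sA _ _].
  rewrite zw (subsetP sA _ zA) !andbT; apply/eqP => zu.
  by move: uA; rewrite inE -zu zA.
Qed.

Local Open Scope ring_scope.

Theorem lemma3 (T : finType) (e : rel T) (v : T) :
  simple_graph e -> acyclic e -> (2 <= #|T|)%N ->
  ((xi e [set: T])%:R / (xi e [set~ v])%:R : rat)
    <= (if odd #|T| then 2 ^+ ((#|T| - 3) %/ 2) + 1
        else 2 ^+ ((#|T| - 2) %/ 2) + 1).
Proof.
move=> [es ei] ac n2.
have hB : (if odd #|T| then 2 ^+ ((#|T| - 3) %/ 2) + 1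
        else 2 ^+ ((#|T| - 2) %/ 2) + 1) = ((2 ^ ((#|T| - 2) %/ 2) + 1)%N%:R : rat).
  rewrite natrD natrX; case: ifP => on //.
  have -> : ((#|T| - 3) %/ 2 = (#|T| - 2) %/ 2)%N.
    have : (#|T| %% 2 = 1)%N by rewrite modn2 on.
    lia.
  by [].
rewrite hB; clear hB.
set X := xi e [set: T]; set Y := xi e [set~ v].
have Y0 : (0 < Y)%N.
  have [A0 [sA iA cA]] := alpha_att e [set~ v].
  apply/card_gt0P; exists A0; by rewrite inE sA iA cA eqxx.
suff hX : (X <= Y + 2 ^ ((#|T| - 2) %/ 2))%N.
  rewrite ler_pdivrMr ?ltr0n // -natrM ler_nat.
  apply: (leq_trans hX); rewrite mulnDl mul1n addnC leq_add2r.
  by rewrite -{1}(muln1 (2 ^ _)%N) leq_mul2l Y0 orbT.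
set a := alpha e [set: T].
have -> : X = #|IS e [set: T] a| by [].
rewrite -(cardsID [set A : {set T} | v \in A] (IS e [set: T] a)).
set Q := _ :&: _; set P := _ :\: _.
have hP : (#|P| <= Y)%N.
  apply: (@leq_trans #|IS e [set~ v] a|); last first.
    apply: IS_xi; apply: alpha_le => B sB iB; exact: alpha_ge (subsetT B) iB.
  apply: subset_leq_card; apply/subsetP => A /setDP[hA vA].
  move: hA; rewrite !inE => /and3P[_ iA cA]; rewrite iA cA andbT ?andbT.
  apply/subsetP => z zA; rewrite in_setC1; apply/eqP => zv.
  by move: vA; rewrite inE -zv zA.
case: (boolP [exists w, e v w]) => [/existsP[w evw] | hno].
- set S'' := [set x | (x != v) && ~~ e v x].
  have hQ : (#|Q| <= #|IS e S'' a.-1|)%N.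
    apply: (@inj_bound _ _ _ v) => A /setIP[hA vA']; have vA : v \in A by move: vA'; rewrite inE.
      done.
    apply: (IS_D1 hA vA); apply/subsetP => z; rewrite in_setD1 => /andP[zv zA].
    move: hA; rewrite inE => /and3P[_ /indepP iA _].
    by rewrite inE zv (iA v z vA zA).
  have hk : forall B : {set T}, B \subset S'' -> indep e B -> (#|B| <= a.-1)%N.
    move=> B sB iB.
    have vB : v \notin B by apply/negP => /(subsetP sB); rewrite inE eqxx.
    have iB' : indep e (v |: B).
      apply: indepU1 => // z zB; by move/(subsetP sB): zB; rewrite inE => /andP[].
    have := alpha_ge (subsetT (v |: B)) iB'; rewrite cardsU1 vB add1n -/a.
    lia.
  have hC := countB es ei ac (leqnn #|S''|) hk.
  have cS : (#|S''| + 2 <= #|T|)%N.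
    have vw : v != w by apply: contraTneq evw => ->; rewrite ei.
    have wS : w \notin S'' by rewrite inE evw andbF.
    have vS : v \notin w |: S'' by rewrite in_setU1 (negbTE vw) inE eqxx.
    have := max_card (mem (v |: (w |: S''))).
    by rewrite cardsU1 vS cardsU1 wS !add1n addn2.
  have hE : (2 ^ #|S''|./2 <= 2 ^ ((#|T| - 2) %/ 2))%N.
    rewrite leq_exp2l // -divn2 leq_div2r //; lia.
  rewrite addnC; apply: leq_add => //.
  exact: leq_trans hQ (leq_trans hC hE).
- have allv : forall A, A \in IS e [set: T] a -> v \in A.
    move=> A; rewrite inE => /and3P[_ iA /eqP cA]; apply/negPn/negP => vA.
    have iA' : indep e (v |: A).
      apply: indepU1 => // z zA; apply/negP => evz; move/negP: hno; apply.
      by apply/existsP; exists z.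
    by move: (alpha_ge (subsetT (v |: A)) iA'); rewrite cardsU1 vA add1n -/a cA ltnn.
  have hP0 : (#|P| <= 0)%N.
    rewrite leqn0 cards_eq0; apply/eqP/setP => A; rewrite in_set0.
    apply/negP => /setDP[hA vA]; by move: vA; rewrite inE (allv _ hA).
  have hQ : (#|Q| <= Y)%N.
    apply: (@leq_trans #|IS e [set~ v] a.-1|).
      apply: (@inj_bound _ _ _ v) => A /setIP[hA _]; first exact: allv.
      apply: (IS_D1 hA (allv _ hA)); apply/subsetP => z; rewrite in_setD1 in_setC1.
      by case/andP.
    apply: IS_xi; apply: alpha_le => B sB iB.
    have vB : v \notin B by apply/negP => /(subsetP sB); rewrite in_setC1 eqxx.
    have iB' : indep e (v |: B).
      apply: indepU1 => // z zB; apply/negP => evz; move/negP: hno; apply.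
      by apply/existsP; exists z.
    have := alpha_ge (subsetT (v |: B)) iB'; rewrite cardsU1 vB add1n -/a.
    lia.
  by move: hP0; rewrite leqn0 => /eqP ->; rewrite addn0 (leq_trans hQ) // leq_addr.
Qed.
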